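(* For every $n\geq 1$, the relation $\leq$ on $\mathcal{PP}(n)$ defined by: $P\leq Q$ if and only if for all $x,y\in P$, $\theta_{P,Q}(x)\leq_h\theta_{P,Q}(y)$ in $Q$ implies $x\leq_h y$ in $P$, is a partial order on $\mathcal{PP}(n)$.
   Context: A plane poset is a finite set $P$ with two partial orders $\leq_h$ and $\leq_r$ such that for all $x\neq y$ in $P$, $x$ and $y$ are comparable for $\leq_h$ if and only if they are not comparable for $\leq_r$. $\mathcal{PP}(n)$ is the set of isomorphism classes (bijections preserving both orders) of plane posets with $n$ elements. On any plane poset the relation $x\leq y$ iff ($x\leq_h y$ or $x\leq_r y$) is a total order (known fact). For $P,Q$ of the same cardinality, $\theta_{P,Q}:P\to Q$ is the unique bijection increasing for these total orders. *)

(* Defs.v *)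
From mathcomp Require Import all_boot.
Set Implicit Arguments. Unset Strict Implicit. Unset Printing Implicit Defensive.

Definition partial_order (T : finType) (r : rel T) : Prop :=
  reflexive r /\ antisymmetric r /\ transitive r.

Record plane_poset (T : finType) : Type := PlanePoset {
  le_h : rel T;
  le_r : rel T;
  le_h_po : partial_order le_h;
  le_r_po : partial_order le_r;
  plane_ax : forall x y, x != y ->
    ((le_h x y || le_h y x) <-> ~~ (le_r x y || le_r y x))
}.

Definition le_tot (T : finType) (P : plane_poset T) : rel T :=
  fun x y => le_h P x y || le_r P x y.

Definition pp_iso (T U : finType) (P : plane_poset T) (Q : plane_poset U) : Prop :=
  exists f : T -> U, bijective f /\
    (forall x y, le_h Q (f x) (f y) = le_h P x y) /\
    (forall x y, le_r Q (f x) (f y) = le_r P x y).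

Definition is_theta (T U : finType) (P : plane_poset T) (Q : plane_poset U)
  (f : T -> U) : Prop :=
  bijective f /\ forall x y, le_tot P x y -> le_tot Q (f x) (f y).

(* P <= Q iff for all x y in P, theta(x) <=_h theta(y) in Q implies x <=_h y in P.
   Since theta_{P,Q} is the unique increasing bijection (known fact), we
   quantify over all such bijections. *)
Definition pp_le (T U : finType) (P : plane_poset T) (Q : plane_poset U) : Prop :=
  forall f : T -> U, is_theta P Q f ->
    forall x y, le_h Q (f x) (f y) -> le_h P x y.

(* Main.v *)
Require Import Defs.
From mathcomp Require Import all_boot.
Set Implicit Arguments. Unset Strict Implicit.


Lemma hrefl (T : finType) (P : plane_poset T) : reflexive (le_h P).
Proof. exact: (le_h_po P).1. Qed.
Lemma hanti (T : finType) (P : plane_poset T) : antisymmetric (le_h P).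
Proof. exact: (le_h_po P).2.1. Qed.
Lemma htrans (T : finType) (P : plane_poset T) : transitive (le_h P).
Proof. exact: (le_h_po P).2.2. Qed.
Lemma rrefl (T : finType) (P : plane_poset T) : reflexive (le_r P).
Proof. exact: (le_r_po P).1. Qed.
Lemma ranti (T : finType) (P : plane_poset T) : antisymmetric (le_r P).
Proof. exact: (le_r_po P).2.1. Qed.
Lemma rtrans (T : finType) (P : plane_poset T) : transitive (le_r P).
Proof. exact: (le_r_po P).2.2. Qed.

Lemma bothcomp (T : finType) (P : plane_poset T) x y : x != y ->
  le_h P x y || le_h P y x -> le_r P x y || le_r P y x -> False.
Proof. move=> nxy H1 H2. by have := (plane_ax P nxy).1 H1; rewrite H2. Qed.

Lemma comp (T : finType) (P : plane_poset T) x y : x != y ->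
  le_h P x y || le_h P y x || le_r P x y || le_r P y x.
Proof.
move=> nxy. case H: (le_h P x y || le_h P y x) => //=.
case Hr: (le_r P x y || le_r P y x); first by [].
by move: ((plane_ax P nxy).2); rewrite Hr H => /(_ isT).
Qed.

Lemma tot_refl (T : finType) (P : plane_poset T) x : le_tot P x x.
Proof. by rewrite /le_tot hrefl. Qed.

Lemma tot_anti (T : finType) (P : plane_poset T) x y :
  le_tot P x y -> le_tot P y x -> x = y.
Proof.
case: (eqVneq x y) => // nxy; rewrite /le_tot.
case/orP => [h1|r1]; case/orP => [h2|r2].
- by apply: (@hanti _ P x y); rewrite h1 h2.
- by exfalso; apply: (bothcomp (P:=P) nxy); rewrite ?h1 ?r2 ?orbT.
- by exfalso; apply: (bothcomp (P:=P) nxy); rewrite ?h2 ?r1 ?orbT.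
- by apply: (@ranti _ P x y); rewrite r1 r2.
Qed.

Lemma tot_total (T : finType) (P : plane_poset T) x y :
  le_tot P x y || le_tot P y x.
Proof.
case: (eqVneq x y) => [->|nxy]; first by rewrite tot_refl.
move: (comp P nxy); rewrite /le_tot.
by case: (le_h P x y); case: (le_h P y x); case: (le_r P x y); case: (le_r P y x).
Qed.

Lemma tot_trans (T : finType) (P : plane_poset T) : transitive (le_tot P).
Proof.
move=> y x z; rewrite /le_tot.
case: (eqVneq x z) => [->|nxz]; first by rewrite hrefl.
case/orP => [hxy|rxy]; case/orP => [hyz|ryz].
- by rewrite (htrans hxy hyz).
- case H: (le_h P x z || le_r P x z) => //.
  have := comp P nxz; rewrite /= -!orbA.
  move: H; case: (le_h P x z) => //; case: (le_r P x z) => //= _.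
  case/orP => [hzx|rzx].
  + have hzy := htrans hzx hxy.
    case: (eqVneq y z) => [eyz|nyz].
    * by move: nxz; rewrite (@hanti _ P x z) ?eqxx //; rewrite hzx -eyz hxy.
    * by exfalso; apply: (bothcomp (P:=P) nyz); rewrite ?hzy ?ryz ?orbT.
  + have ryx := rtrans ryz rzx.
    case: (eqVneq x y) => [exy|nxy].
    * by move: nxz; rewrite (@ranti _ P x z) ?eqxx //; rewrite rzx exy ryz.
    * by exfalso; apply: (bothcomp (P:=P) nxy); rewrite ?hxy ?ryx ?orbT.
- case H: (le_h P x z || le_r P x z) => //.
  have := comp P nxz; rewrite /= -!orbA.
  move: H; case: (le_h P x z) => //; case: (le_r P x z) => //= _.
  case/orP => [hzx|rzx].
  + have hyx := htrans hyz hzx.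
    case: (eqVneq x y) => [exy|nxy].
    * by move: nxz; rewrite (@hanti _ P x z) ?eqxx //; rewrite hzx exy hyz.
    * by exfalso; apply: (bothcomp (P:=P) nxy); rewrite ?hyx ?rxy ?orbT.
  + have rzy := rtrans rzx rxy.
    case: (eqVneq y z) => [eyz|nyz].
    * by move: nxz; rewrite (@ranti _ P x z) ?eqxx //; rewrite rzx -eyz rxy.
    * by exfalso; apply: (bothcomp (P:=P) nyz); rewrite ?hyz ?rzy ?orbT.
- by rewrite (rtrans rxy ryz) orbT.
Qed.

Definition rk (T : finType) (P : plane_poset T) (x : T) : nat :=
  #|[pred y | le_tot P y x && (y != x)]|.

Lemma rk_mono (T : finType) (P : plane_poset T) x y :
  le_tot P x y -> rk P x <= rk P y.
Proof.
move=> xy; apply: subset_leq_card; apply/subsetP => z; rewrite !inE.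
case/andP => zx nzx; rewrite (tot_trans zx xy) /=.
apply/eqP => ezy; subst z.
by move: nzx; rewrite (tot_anti xy zx) eqxx.
Qed.

Lemma rk_strict (T : finType) (P : plane_poset T) x y :
  ~~ le_tot P x y -> rk P y < rk P x.
Proof.
move=> nxy.
have yx : le_tot P y x by move: (tot_total P x y); rewrite (negbTE nxy).
have nyx : y != x by apply/eqP => e; move: nxy; rewrite e tot_refl.
apply: proper_card; apply/properP; split.
- apply/subsetP => z; rewrite !inE.
  case/andP => zy nzy; rewrite (tot_trans zy yx) /=.
  apply/eqP => ezx; subst z.
  by move: nzy; rewrite (tot_anti yx zy) eqxx.
- by exists y; rewrite !inE ?yx ?nyx /= ?eqxx ?andbF.
Qed.

Lemma rk_le (T : finType) (P : plane_poset T) x y :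
  le_tot P x y = (rk P x <= rk P y).
Proof.
apply/idP/idP; first exact: rk_mono.
case H: (le_tot P x y) => //; move/negbT: H => /rk_strict.
by rewrite ltnNge => /negP.
Qed.

Lemma rk_inj (T : finType) (P : plane_poset T) : injective (rk P).
Proof. by move=> x y e; apply: (tot_anti (P:=P)); rewrite rk_le e. Qed.

Lemma rk_lt (T : finType) (P : plane_poset T) x : rk P x < #|T|.
Proof.
have H : rk P x <= #|predC1 x|.
  by apply: subset_leq_card; apply/subsetP => z; rewrite !inE => /andP[].
rewrite cardC1 in H; apply: (leq_ltn_trans H); rewrite ltn_predL.
by apply/card_gt0P; exists x.
Qed.

Lemma theta_rk (T U : finType) (P : plane_poset T) (Q : plane_poset U) f :
  is_theta P Q f -> forall x, rk Q (f x) = rk P x.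
Proof.
case=> [[g fK gK] mono] x; rewrite /rk -(card_image (bij_inj (Bijective fK gK))).
apply: eq_card => z; rewrite !inE; apply/andP/imageP.
- case=> zfx nz; exists (g z); last by rewrite gK.
  rewrite inE; apply/andP; split.
  + case H: (le_tot P (g z) x) => //.
    have: le_tot P x (g z) by move: (tot_total P (g z) x); rewrite H.
    move/mono; rewrite gK => fxz.
    by move: nz; rewrite (tot_anti zfx fxz) eqxx.
  + by apply/eqP => e; move: nz; rewrite -e gK eqxx.
- case=> y; rewrite inE => /andP[yx nyx] ->; split; first exact: mono.
  by rewrite (inj_eq (can_inj fK)).
Qed.

Lemma theta_le (T U : finType) (P : plane_poset T) (Q : plane_poset U) f :
  is_theta P Q f -> forall x y, le_tot Q (f x) (f y) = le_tot P x y.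
Proof. by move=> th x y; rewrite !rk_le !(theta_rk th). Qed.

Lemma theta_inv (T U : finType) (P : plane_poset T) (Q : plane_poset U) f g :
  is_theta P Q f -> cancel f g -> cancel g f -> is_theta Q P g.
Proof.
move=> th fK gK; split; first by exists f.
by move=> a b; rewrite -(theta_le th) !gK.
Qed.

Lemma theta_ex (T U : finType) (P : plane_poset T) (Q : plane_poset U) :
  #|T| = #|U| -> exists f, is_theta P Q f.
Proof.
move=> e.
pose rP := fun x => Ordinal (rk_lt P x).
pose rQ := fun x => Ordinal (rk_lt Q x).
have rQb : bijective rQ.
  apply: inj_card_bij; last by rewrite card_ord.
  by move=> a b /(congr1 val) /= /rk_inj.
have rPb : bijective rP.
  apply: inj_card_bij; last by rewrite card_ord.
  by move=> a b /(congr1 val) /= /rk_inj.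
case: rQb => gQ rQK gQK.
have cb : bijective (cast_ord e) by exists (cast_ord (esym e)); [exact: cast_ordK | exact: cast_ordKV].
have rk_f : forall x, rk Q (gQ (cast_ord e (rP x))) = rk P x.
  move=> x; have := congr1 val (gQK (cast_ord e (rP x))); by [].
exists (gQ \o cast_ord e \o rP); split.
  by apply: bij_comp; [apply: bij_comp => //; exists rQ | ].
by move=> x y; rewrite !rk_le /= !rk_f.
Qed.

Lemma iso_tot (T U : finType) (P : plane_poset T) (Q : plane_poset U) f :
  (forall x y, le_h Q (f x) (f y) = le_h P x y) ->
  (forall x y, le_r Q (f x) (f y) = le_r P x y) ->
  forall x y, le_tot Q (f x) (f y) = le_tot P x y.
Proof. by move=> h r x y; rewrite /le_tot h r. Qed.

Lemma le_r_char (T : finType) (P : plane_poset T) x y :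
  le_r P x y = (x == y) || (le_tot P x y && ~~ le_h P x y).
Proof.
case: (eqVneq x y) => [->|nxy]; first by rewrite rrefl.
rewrite /= /le_tot; case Hr: (le_r P x y).
- have -> : le_h P x y = false.
    apply/negbTE/negP => hxy; apply: (bothcomp (P:=P) nxy); by rewrite ?hxy ?Hr ?orbT.
  by [].
- by rewrite orbF; case: (le_h P x y).
Qed.

Theorem proposition10 (n : nat) (Hn : 1 <= n) :
  (* well-defined on isomorphism classes *)
  (forall (T T' U U' : finType) (P : plane_poset T) (P' : plane_poset T')
          (Q : plane_poset U) (Q' : plane_poset U'),
     #|T| = n -> #|U| = n -> pp_iso P P' -> pp_iso Q Q' ->
     pp_le P Q -> pp_le P' Q') /\
  (* reflexive *)
  (forall (T : finType) (P : plane_poset T), #|T| = n -> pp_le P P) /\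
  (* antisymmetric (up to isomorphism) *)
  (forall (T U : finType) (P : plane_poset T) (Q : plane_poset U),
     #|T| = n -> #|U| = n -> pp_le P Q -> pp_le Q P -> pp_iso P Q) /\
  (* transitive *)
  (forall (T U V : finType) (P : plane_poset T) (Q : plane_poset U)
          (R : plane_poset V),
     #|T| = n -> #|U| = n -> #|V| = n ->
     pp_le P Q -> pp_le Q R -> pp_le P R).
Proof.
split.
  move=> T T' U U' P P' Q Q' _ _ [g [[gi gK giK] [gh gr]]] [k [[ki kK kiK] [kh kr]]] le.
  move=> f' [fb fm] x' y' H.
  have th : is_theta P Q (ki \o f' \o g).
    split; first by apply: bij_comp; [apply: bij_comp => //; exists k | exists gi].
    move=> x y /=; rewrite -(iso_tot kh kr) !kiK -(iso_tot gh gr) => /fm //.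
  have := le _ th (gi x') (gi y'); rewrite /= -kh !kiK !giK => /(_ H).
  by rewrite -gh !giK.
split.
  move=> T P _ f th x y; suff fid : forall z, f z = z by rewrite !fid.
  by move=> z; apply: (rk_inj (P:=P)); rewrite (theta_rk th).
split.
  move=> T U P Q eT eU lePQ leQP.
  have [g th] := theta_ex P Q (etrans eT (esym eU)).
  case: (th) => [[gi gK giK] _].
  have thi := theta_inv th gK giK.
  have hh : forall x y, le_h Q (g x) (g y) = le_h P x y.
    move=> x y; apply/idP/idP; first exact: lePQ th x y.
    by move=> H; apply: (leQP gi thi); rewrite !gK.
  exists g; split; first by exists gi.
  split => // x y.
  by rewrite !le_r_char hh (theta_le th) (inj_eq (can_inj gK)).
move=> T U V P Q R eT eU eV lePQ leQR f thf x y H.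
have [g th] := theta_ex P Q (etrans eT (esym eU)).
case: (th) => [[gi gK giK] _].
have thi := theta_inv th gK giK.
have thh : is_theta Q R (f \o gi).
  split; first by apply: bij_comp; [case: thf | exists g].
  by move=> a b /= /(proj2 thi) /(proj2 thf).
apply: (lePQ g th); apply: (leQR _ thh); by rewrite /= !gK.
Qed.
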